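(* Let $F$ be a field with $\mathrm{char}\,F\neq 2$ and let $n>1$ be an integer. Let $I_n$ be the $F$-algebra defined in the context. Then the automorphism group of $I_n$ is isomorphic to the orthogonal group $O_{n-1}(F)=\{A\in M_{n-1}(F)\mid AA^T=A^TA=E\}$, and the Lie algebra of derivations of $I_n$ is isomorphic to the orthogonal Lie algebra $\mathfrak{o}_{n-1}(F)=\{A\in M_{n-1}(F)\mid A^T=-A\}$.
   Context: $I_n$ denotes the $n$-dimensional (non-associative) algebra over $F$ with basis $e_1,\ldots,e_n$ and multiplication given by $e_n\cdot e_n=2e_n$, $e_n\cdot e_j=e_j$, $e_j\cdot e_j=e_n$ for $j=1,\ldots,n-1$, with all other products of basis elements equal to zero (extended bilinearly). It is a pre-Lie algebra, i.e. $(xy)z-x(yz)=(yx)z-y(xz)$ for all $x,y,z$. A derivation is a linear map $d$ with $d(xy)=d(x)y+xd(y)$. $E$ denotes the identity matrix. *)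

(* Defs.v *)
From HB Require Import structures.
From mathcomp Require Import all_boot all_order all_algebra.
Set Implicit Arguments. Unset Strict Implicit. Unset Printing Implicit Defensive.
Import GRing.Theory.
Local Open Scope ring_scope.

(* The algebra I_n with n = m.+1.  Basis vectors e_1,...,e_n are the
   standard column vectors delta_mx k 0 of 'cV[F]_(m.+1), k : 'I_(m.+1);
   the distinguished basis vector e_n is indexed by ord_max. *)
Section In.
Variables (F : fieldType) (m : nat).
Local Notation n := m.+1.

Definition ebas (k : 'I_n) : 'cV[F]_n := delta_mx k 0.

Definition In_basis_mul (i j : 'I_n) : 'cV[F]_n :=
  if (i == ord_max) && (j == ord_max) then 2%:R *: ebas ord_max
  else if i == ord_max then ebas j
  else if i == j then ebas ord_max
  else 0.

Definition In_mul (x y : 'cV[F]_n) : 'cV[F]_n :=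
  \sum_(i < n) \sum_(j < n) (x i 0 * y j 0) *: In_basis_mul i j.

(* linear endomorphisms of F^n are represented by matrices acting on
   column vectors (v |-> A *m v), so composition is matrix product. *)
Definition is_automorphism (A : 'M[F]_n) : Prop :=
  A \in unitmx /\
  forall x y, A *m In_mul x y = In_mul (A *m x) (A *m y).

Definition is_derivation (D : 'M[F]_n) : Prop :=
  forall x y, D *m In_mul x y = In_mul (D *m x) y + In_mul x (D *m y).
End In.

Definition is_orth_mx (F : fieldType) (k : nat) (A : 'M[F]_k) : Prop :=
  A *m A^T = 1%:M /\ A^T *m A = 1%:M.

Definition is_skew_mx (F : fieldType) (k : nat) (A : 'M[F]_k) : Prop :=
  A^T = - A.

Definition lie_bracket (F : fieldType) (k : nat) (A B : 'M[F]_k) : 'M[F]_k :=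
  A *m B - B *m A.

Definition group_iso (F : fieldType) (k l : nat)
  (G : 'M[F]_k -> Prop) (H : 'M[F]_l -> Prop) (phi : 'M[F]_k -> 'M[F]_l) : Prop :=
  (forall A, G A -> H (phi A)) /\
  (forall A B, G A -> G B -> phi A = phi B -> A = B) /\
  (forall B, H B -> exists A, G A /\ phi A = B) /\
  (forall A B, G A -> G B -> phi (A *m B) = phi A *m phi B).

Definition lie_iso (F : fieldType) (k l : nat)
  (L : 'M[F]_k -> Prop) (M : 'M[F]_l -> Prop) (phi : 'M[F]_k -> 'M[F]_l) : Prop :=
  (forall A, L A -> M (phi A)) /\
  (forall A B, L A -> L B -> phi A = phi B -> A = B) /\
  (forall B, M B -> exists A, L A /\ phi A = B) /\
  (forall (a : F) A B, L A -> L B -> phi (a *: A + B) = a *: phi A + phi B) /\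
  (forall A B, L A -> L B -> phi (lie_bracket A B) = lie_bracket (phi A) (phi B)).

(* Main.v *)
From HB Require Import structures.
From mathcomp Require Import all_boot all_order all_algebra.
Require Import Defs.
Set Implicit Arguments. Unset Strict Implicit. Unset Printing Implicit Defensive.
Import GRing.Theory.
Local Open Scope ring_scope.

Lemma sum_max (R : nmodType) m (G : 'I_m.+1 -> R) :
  \sum_(i < m.+1) G i = \sum_(i < m) G (lift ord_max i) + G ord_max.
Proof.
rewrite big_ord_recr /=; congr (_ + _); apply: eq_bigr => i _.
by congr G; apply: val_inj; rewrite /= /bump leqNgt ltn_ord.
Qed.

Lemma liftmax_neq m (i : 'I_m) : (lift ord_max i == ord_max) = false.
Proof. by apply/negbTE; rewrite eq_sym neq_lift. Qed.

Lemma ebasE (F : fieldType) m (k i : 'I_m.+1) : ebas F k i 0 = (i == k)%:R.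
Proof. by rewrite /ebas mxE andbT. Qed.

Lemma BmulE (F : fieldType) m (i j k : 'I_m.+1) : In_basis_mul F i j k 0 =
  if (i == ord_max) && (j == ord_max) then 2%:R * (k == ord_max)%:R
  else if i == ord_max then (k == j)%:R else if i == j then (k == ord_max)%:R else 0.
Proof.
rewrite /In_basis_mul; case: ifP => _; first by rewrite mxE ebasE.
case: ifP => _; first by rewrite ebasE.
by case: ifP => _; rewrite ?ebasE ?mxE.
Qed.

Lemma In_mulE (F : fieldType) m (x y : 'cV[F]_m.+1) k :
  In_mul x y k 0 = if k == ord_max then
     2%:R * (x ord_max 0 * y ord_max 0) + \sum_(j < m) x (lift ord_max j) 0 * y (lift ord_max j) 0
  else x ord_max 0 * y k 0.
Proof.
rewrite /In_mul summxE; under eq_bigr => i _ do (rewrite summxE; under eq_bigr => j _ do rewrite mxE BmulE).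
case: (unliftP ord_max k) => [k'|] ->; rewrite ?liftmax_neq ?eqxx.
  rewrite (bigD1 ord_max) //= [X in _ + X]big1 ?addr0 => [|i ne]; last first.
    by rewrite big1 // => j _; rewrite (negbTE ne) /=; case: eqP; rewrite mulr0.
  rewrite (bigD1 (lift ord_max k')) //= big1 ?addr0 => [|j ne]; last first.
    by rewrite eqxx /=; case: ifP => _; rewrite ?mulr0 // eq_sym (negbTE ne) mulr0.
  by rewrite eqxx /= eqxx liftmax_neq mulr1.
rewrite sum_max addrC; congr (_ + _).
  rewrite (bigD1 ord_max) //= big1 ?addr0 => [|j ne]; last first.
    by rewrite eqxx (negbTE ne) /= eq_sym (negbTE ne) mulr0.
  by rewrite eqxx /= mulr1 mulrC.
apply: eq_bigr => i _; rewrite (bigD1 (lift ord_max i)) //= big1 ?addr0 => [|j ne]; last first.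
  by rewrite liftmax_neq /= eq_sym (negbTE ne) mulr0.
by rewrite liftmax_neq /= eqxx mulr1.
Qed.

Lemma In_mul_bas (F : fieldType) m (i j : 'I_m.+1) :
  In_mul (ebas F i) (ebas F j) = In_basis_mul F i j.
Proof.
rewrite /In_mul (bigD1 i) //= [X in _ + X]big1 ?addr0 => [|i' ne]; last first.
  by rewrite big1 // => j' _; rewrite (@ebasE F m i i') (negbTE ne) mul0r scale0r.
rewrite (bigD1 j) //= [X in _ + X]big1 ?addr0 => [|j' ne]; last first.
  by rewrite (@ebasE F m j j') (negbTE ne) mulr0 scale0r.
by rewrite !ebasE !eqxx mulr1 scale1r.
Qed.

Notation L := (lift ord_max).

Lemma mul_ebas (F : fieldType) m (A : 'M[F]_m.+1) j k : (A *m ebas F j) k 0 = A k j.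
Proof.
rewrite mxE (bigD1 j) //= [X in _ + X]big1 ?addr0 => [|j' ne]; last by rewrite ebasE (negbTE ne) mulr0.
by rewrite ebasE eqxx mulr1.
Qed.

Lemma col_ebas (F : fieldType) m (A : 'M[F]_m.+1) j : col j A = A *m ebas F j.
Proof. by apply/matrixP => k l; rewrite ord1 mul_ebas mxE. Qed.

Lemma AmulB (F : fieldType) m (A : 'M[F]_m.+1) i j k : (A *m In_basis_mul F i j) k 0 =
  if (i == ord_max) && (j == ord_max) then 2%:R * A k ord_max
  else if i == ord_max then A k j else if i == j then A k ord_max else 0.
Proof.
rewrite /In_basis_mul; case: ifP => _; first by rewrite -scalemxAr (mxE _ (fun i j => 2%:R * (A *m ebas F ord_max) i j)) mul_ebas.
case: ifP => _; first by rewrite mul_ebas.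
by case: ifP => _; rewrite ?mul_ebas // mulmx0 mxE.
Qed.

Lemma aut_eq (F : fieldType) m (A : 'M[F]_m.+1) i j k : is_automorphism A ->
  (A *m In_basis_mul F i j) k 0 = In_mul (col i A) (col j A) k 0.
Proof. by move=> [_ H]; rewrite -In_mul_bas H !col_ebas. Qed.

Lemma two_eq (F : fieldType) (x : F) : 2%:R * x = x -> x = 0.
Proof. by rewrite mulr_natl mulr2n -{3}[x]addr0 => /addrI. Qed.

Definition red (F : fieldType) m (A : 'M[F]_m.+1) : 'M[F]_m :=
  \matrix_(i, j) A (L i) (L j).

Lemma aut_struct (F : fieldType) m (A : 'M[F]_m.+1) : (2%:R : F) != 0 -> (0 < m)%N ->
  is_automorphism A ->
  [/\ A ord_max ord_max = 1, forall k, A (L k) ord_max = 0,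
      forall k, A ord_max (L k) = 0 & is_orth_mx (red A)].
Proof.
move=> h2 hm Aa.
have E i j k := aut_eq i j k Aa.
have E2 i k : A (L i) (L k) = A ord_max ord_max * A (L i) (L k).
  by have := E ord_max (L k) (L i); rewrite AmulB In_mulE eqxx !liftmax_neq /= !mxE.
have c1 : A ord_max ord_max = 1.
  apply/eqP; apply/negPn/negP => c1.
  have Z i k : A (L i) (L k) = 0.
    move: (E2 i k) => /eqP; rewrite -subr_eq0 -{1}[A (L i) _]mul1r -mulrBl mulf_eq0.
    by rewrite subr_eq0 [1 == _]eq_sym (negbTE c1) => /eqP.
  pose k0 : 'I_m := Ordinal hm.
  have Zc i : A (L i) ord_max = 0.
    by have := E (L k0) (L k0) (L i); rewrite AmulB In_mulE !liftmax_neq /= eqxx !mxE Z mulr0.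
  have cc : A ord_max ord_max = 0.
    have := E ord_max ord_max ord_max; rewrite AmulB In_mulE eqxx /= !mxE.
    rewrite big1 => [|j _]; last by rewrite !mxE Zc mulr0.
    rewrite addr0 => /(mulfI h2) /eqP; rewrite -subr_eq0 -{1}[A _ _]mulr1 -mulrBr mulf_eq0.
    by rewrite subr_eq0 [1 == _]eq_sym (negbTE c1) orbF => /eqP.
  have H0 : A *m ebas F ord_max = 0.
    apply/matrixP => i j; rewrite ord1 {j} mul_ebas mxE.
    by case: (unliftP ord_max i) => [i'|] ->; [exact: Zc | exact: cc].
  have := mulKmx Aa.1 (ebas F ord_max); rewrite H0 mulmx0 => /matrixP /(_ ord_max 0).
  by rewrite !mxE !eqxx => /eqP; rewrite eq_sym oner_eq0.
have Zc k : A (L k) ord_max = 0.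
  apply: two_eq.
  by have := E ord_max ord_max (L k); rewrite AmulB In_mulE eqxx liftmax_neq /= !mxE c1 mul1r.
have Zr k : A ord_max (L k) = 0.
  have := E ord_max (L k) ord_max; rewrite AmulB In_mulE eqxx liftmax_neq /= !mxE c1 mul1r.
  rewrite big1 => [|j _]; last by rewrite !mxE Zc mul0r.
  by rewrite addr0 => /esym /two_eq.
have D a b : \sum_j A (L j) (L a) * A (L j) (L b) = (a == b)%:R.
  have := E (L a) (L b) ord_max; rewrite AmulB In_mulE !liftmax_neq /= (inj_eq lift_inj) eqxx !mxE Zr.
  rewrite mul0r mulr0 add0r; under eq_bigr do rewrite !mxE.
  by case: eqP => _ <-; rewrite ?c1.
have h : (red A)^T *m red A = 1%:M.
  apply/matrixP => a b; rewrite !mxE -D; apply: eq_bigr => j _; rewrite !mxE.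
  done.
by split => //; split => //; apply: mulmx1C.
Qed.

Lemma maxlift_neq m (i : 'I_m) : (ord_max == lift ord_max i) = false.
Proof. by apply/negbTE; rewrite neq_lift. Qed.

Lemma der_eq (F : fieldType) m (D : 'M[F]_m.+1) i j k : is_derivation D ->
  (D *m In_basis_mul F i j) k 0 =
  In_mul (col i D) (ebas F j) k 0 + In_mul (ebas F i) (col j D) k 0.
Proof. by move=> H; rewrite -In_mul_bas H !col_ebas mxE. Qed.

Lemma sum_delta (F : fieldType) m (f : 'I_m -> F) b :
  \sum_(j < m) f j * ebas F (L b) (L j) 0 = f b.
Proof.
rewrite (bigD1 b) //= [X in _ + X]big1 ?addr0 => [|j ne]; last first.
  by rewrite ebasE (inj_eq lift_inj) (negbTE ne) mulr0.
by rewrite ebasE eqxx mulr1.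
Qed.

Lemma sum_delta' (F : fieldType) m (f : 'I_m -> F) b :
  \sum_(j < m) ebas F (L b) (L j) 0 * f j = f b.
Proof. by rewrite -(sum_delta f b); apply: eq_bigr => j _; rewrite mulrC. Qed.

Lemma col_entry (F : fieldType) m (D : 'M[F]_m.+1) i j : col j D i 0 = D i j.
Proof. by rewrite mxE. Qed.

Lemma der_struct (F : fieldType) m (D : 'M[F]_m.+1) : (2%:R : F) != 0 ->
  is_derivation D ->
  [/\ D ord_max ord_max = 0, forall k, D (L k) ord_max = 0,
      forall k, D ord_max (L k) = 0 & is_skew_mx (red D)].
Proof.
move=> h2 Dd.
have E i j k := der_eq i j k Dd.
have Zc k : D (L k) ord_max = 0.
  apply: two_eq.
  have := E ord_max ord_max (L k); rewrite AmulB !In_mulE eqxx liftmax_neq /= !col_entry.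
  by rewrite !ebasE liftmax_neq eqxx mulr0 mul1r add0r.
have c0 : D ord_max ord_max = 0.
  have := E ord_max ord_max ord_max; rewrite AmulB !In_mulE eqxx /= !col_entry !ebasE eqxx.
  rewrite !big1 => [|j _|j _]; rewrite ?ebasE ?liftmax_neq ?mulr0 ?mul0r //.
  rewrite !addr0 mulr1 mul1r -{1}[2%:R * _]addr0 => /addrI /esym /eqP.
  by rewrite mulf_eq0 (negbTE h2) => /eqP.
have Zr k : D ord_max (L k) = 0.
  have := E ord_max (L k) ord_max; rewrite AmulB !In_mulE eqxx liftmax_neq /= !col_entry.
  rewrite ebasE maxlift_neq mulr0 mulr0 add0r ebasE eqxx mul1r sum_delta col_entry Zc.
  rewrite big1 => [|j _]; last by rewrite ebasE liftmax_neq mul0r.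
  by rewrite addr0 add0r => /esym /two_eq.
have S a b : D (L b) (L a) + D (L a) (L b) = 0.
  have := E (L a) (L b) ord_max; rewrite AmulB !In_mulE !liftmax_neq /= (inj_eq lift_inj) eqxx !col_entry.
  rewrite !ebasE !maxlift_neq !mulr0 !mul0r !add0r sum_delta sum_delta' !col_entry.
  by rewrite mulr0 add0r; case: eqP => _; rewrite ?c0 => <-.
split => //; apply/matrixP => a b; rewrite !mxE.
by apply/eqP; rewrite -subr_eq0 opprK S.
Qed.

Definition ext0 (F : fieldType) m (c : F) (Q : 'M[F]_m) : 'M[F]_m.+1 :=
  \matrix_(i, j) match unlift ord_max i, unlift ord_max j with
    | Some a, Some b => Q a b
    | None, None => c
    | _, _ => 0 end.

Lemma ext0LL (F : fieldType) m c (Q : 'M[F]_m) a b : ext0 c Q (L a) (L b) = Q a b.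
Proof. by rewrite mxE !liftK. Qed.
Lemma ext0MM (F : fieldType) m c (Q : 'M[F]_m) : ext0 c Q ord_max ord_max = c.
Proof. by rewrite mxE unlift_none. Qed.
Lemma ext0LM (F : fieldType) m c (Q : 'M[F]_m) a : ext0 c Q (L a) ord_max = 0.
Proof. by rewrite mxE unlift_none liftK. Qed.
Lemma ext0ML (F : fieldType) m c (Q : 'M[F]_m) a : ext0 c Q ord_max (L a) = 0.
Proof. by rewrite mxE unlift_none liftK. Qed.

Lemma red_ext0 (F : fieldType) m c (Q : 'M[F]_m) : red (ext0 c Q) = Q.
Proof. by apply/matrixP => a b; rewrite mxE ext0LL. Qed.

Lemma ext0_red (F : fieldType) m (A : 'M[F]_m.+1) :
  (forall k, A (L k) ord_max = 0) -> (forall k, A ord_max (L k) = 0) ->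
  A = ext0 (A ord_max ord_max) (red A).
Proof.
move=> h1 h2; apply/matrixP => i j.
case: (unliftP ord_max i) => [a|] ->; case: (unliftP ord_max j) => [b|] ->;
  by rewrite ?ext0LL ?ext0MM ?ext0LM ?ext0ML ?h1 ?h2 ?mxE.
Qed.

Definition vred (F : fieldType) m (x : 'cV[F]_m.+1) : 'cV[F]_m :=
  \matrix_(i < m, j < 1) x (L i) j.

Lemma dotE (F : fieldType) m (x y : 'cV[F]_m.+1) :
  \sum_(j < m) x (L j) 0 * y (L j) 0 = ((vred x)^T *m vred y) 0 0.
Proof. by rewrite mxE; apply: eq_bigr => j _; rewrite !mxE. Qed.

Lemma ext0mulL (F : fieldType) m c (Q : 'M[F]_m) (v : 'cV[F]_m.+1) k :
  (ext0 c Q *m v) (L k) 0 = (Q *m vred v) k 0.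
Proof.
rewrite !mxE sum_max ext0LM mul0r addr0; apply: eq_bigr => j _.
by rewrite ext0LL mxE.
Qed.

Lemma ext0mulM (F : fieldType) m c (Q : 'M[F]_m) (v : 'cV[F]_m.+1) :
  (ext0 c Q *m v) ord_max 0 = c * v ord_max 0.
Proof.
rewrite !mxE sum_max ext0MM big1 ?add0r // => j _.
by rewrite ext0ML mul0r.
Qed.

Lemma vred_ext0 (F : fieldType) m c (Q : 'M[F]_m) (v : 'cV[F]_m.+1) :
  vred (ext0 c Q *m v) = Q *m vred v.
Proof. by apply/matrixP => k l; rewrite ord1 mxE ext0mulL. Qed.

Lemma red_mul (F : fieldType) m (A B : 'M[F]_m.+1) :
  (forall k, A (L k) ord_max = 0) -> red (A *m B) = red A *m red B.
Proof.
move=> h; apply/matrixP => a b; rewrite !mxE sum_max h mul0r addr0.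
by apply: eq_bigr => j _; rewrite !mxE.
Qed.

Lemma red_lin (F : fieldType) m (a : F) (A B : 'M[F]_m.+1) :
  red (a *: A + B) = a *: red A + red B.
Proof. by apply/matrixP => i j; rewrite !mxE. Qed.

Lemma red_sub (F : fieldType) m (A B : 'M[F]_m.+1) :
  red (A - B) = red A - red B.
Proof. by apply/matrixP => i j; rewrite !mxE. Qed.

Lemma ext0_aut (F : fieldType) m (Q : 'M[F]_m) : is_orth_mx Q ->
  is_automorphism (ext0 1 Q).
Proof.
move=> [h1 h2]; split.
  have : ext0 1 Q *m ext0 1 Q^T = 1%:M.
    apply/matrixP => i j; case: (unliftP ord_max j) => [b|] ->.
      case: (unliftP ord_max i) => [a|] ->.
        rewrite [LHS]mxE sum_max ext0LM mul0r addr0 [RHS]mxE (inj_eq lift_inj).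
        have := congr1 (fun M : 'M[F]_m => M a b) h1; rewrite /= [LHS]mxE [RHS]mxE => <-.
        by apply: eq_bigr => k _; rewrite !ext0LL [Q^T _ _]mxE.
      rewrite [LHS]mxE sum_max ext0MM ext0ML mulr0 addr0 [RHS]mxE maxlift_neq.
      by rewrite big1 // => k _; rewrite ext0ML mul0r.
    case: (unliftP ord_max i) => [a|] ->.
      rewrite [LHS]mxE sum_max ext0LM ext0MM mul0r addr0 [RHS]mxE liftmax_neq.
      by rewrite big1 // => k _; rewrite ext0LM mulr0.
    rewrite [LHS]mxE sum_max !ext0MM mulr1 big1 ?add0r => [|k _]; last by rewrite ext0ML mul0r.
    by rewrite mxE eqxx.
  by case/mulmx1_unit.
move=> x y; apply/matrixP => i j; rewrite ord1 {j}.
case: (unliftP ord_max i) => [a|] ->.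
  rewrite ext0mulL In_mulE liftmax_neq ext0mulM mul1r ext0mulL !mxE mulr_sumr.
  by apply: eq_bigr => k _; rewrite !mxE In_mulE liftmax_neq mulrCA.
rewrite ext0mulM mul1r !In_mulE eqxx !ext0mulM !mul1r !dotE !vred_ext0.
by rewrite trmx_mul mulmxA -(mulmxA _ Q^T) h2 mulmx1.
Qed.

Lemma ext0_der (F : fieldType) m (S : 'M[F]_m) : is_skew_mx S ->
  is_derivation (ext0 0 S).
Proof.
move=> hS x y; apply/matrixP => i j; rewrite ord1 {j} [RHS]mxE.
case: (unliftP ord_max i) => [a|] ->.
  rewrite ext0mulL !In_mulE liftmax_neq !ext0mulM mul0r mul0r add0r ext0mulL !mxE mulr_sumr.
  by apply: eq_bigr => k _; rewrite !mxE In_mulE liftmax_neq mulrCA.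
rewrite ext0mulM mul0r !In_mulE eqxx !ext0mulM !mul0r !mulr0 !add0r !dotE !vred_ext0.
rewrite trmx_mul hS mulmxN mulNmx -mulmxA [X in _ = X + _]mxE.
by rewrite addNr.
Qed.

Theorem theorem1 (F : fieldType) (m : nat) (hF : (2%:R : F) != 0) (hm : (0 < m)%N) :
  (exists phi : 'M[F]_(m.+1) -> 'M[F]_m,
     group_iso (@is_automorphism F m) (@is_orth_mx F m) phi) /\
  (exists psi : 'M[F]_(m.+1) -> 'M[F]_m,
     lie_iso (@is_derivation F m) (@is_skew_mx F m) psi).
Proof.
split.
- exists (@red F m); split; [|split; [|split]].
  + by move=> A HA; case: (aut_struct hF hm HA).
  + move=> A B HA HB e.
    case: (aut_struct hF hm HA) => cA zA rA _; case: (aut_struct hF hm HB) => cB zB rB _.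
    by rewrite (ext0_red zA rA) (ext0_red zB rB) cA cB e.
  + by move=> B HB; exists (ext0 1 B); split; [exact: ext0_aut | exact: red_ext0].
  + by move=> A B HA _; case: (aut_struct hF hm HA) => _ zA _ _; exact: red_mul.
- exists (@red F m); split; [|split; [|split; [|split]]].
  + by move=> A HA; case: (der_struct hF HA).
  + move=> A B HA HB e.
    case: (der_struct hF HA) => cA zA rA _; case: (der_struct hF HB) => cB zB rB _.
    by rewrite (ext0_red zA rA) (ext0_red zB rB) cA cB e.
  + by move=> B HB; exists (ext0 0 B); split; [exact: ext0_der | exact: red_ext0].
  + by move=> a A B _ _; exact: red_lin.
  + move=> A B HA HB; case: (der_struct hF HA) => _ zA _ _; case: (der_struct hF HB) => _ zB _ _.
    by rewrite /lie_bracket red_sub !red_mul.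
Qed.
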